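(* For every finite $K\ge1$, the exact sequence \[0\to\bigoplus_{i=1}^K\mathbb Z\overset{i}{\to}\bigoplus_{i=1}^K\mathbb Z[\tfrac12]\overset{\pi}{\to}\bigoplus_{i=1}^K\mathbb Z(2^\infty)\to0\] (componentwise inclusion and quotient maps) is coarsely split.
   Context: $\mathbb Z[\tfrac12]=\{m/2^k:m\in\mathbb Z,k\ge0\}$; $\mathbb Z(2^\infty)\cong\mathbb Z[\tfrac12]/\mathbb Z$. A proper left invariant metric is $d(g,h)=\|g^{-1}h\|$ for a proper norm (trivial only at identity, symmetric, subadditive, finite balls). An exact sequence $0\to A\overset{i}{\to}G\overset{\pi}{\to}Q\to0$ is coarsely split if there are proper left invariant metrics $d_A,d_G,d_Q$ and a coarse equivalence $f:(G,d_G)\to(A\oplus Q,d_A\oplus d_Q)$ ($\ell_1$ sum metric) with $f\circ i$ at bounded distance from $a\mapsto(a,0)$ and $\pi'\circ f$ at bounded distance from $\pi$, $\pi'$ the projection onto $Q$. Coarse maps: for each $\delta$ there is $\epsilon$ with $d(x,y)\le\delta\Rightarrow d(f x,f y)\le\epsilon$; coarse equivalences are coarse maps with coarse inverses up to bounded distance. *)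

(* Defs.v *)
From Stdlib Require Import Reals List.
From mathcomp Require Import all_boot all_order all_algebra.
Set Implicit Arguments. Unset Strict Implicit. Unset Printing Implicit Defensive.
Import Order.TTheory GRing.Theory Num.Theory.

Section Coarse.
Variable T : Type.
Variables (z : T) (add : T -> T -> T) (opp : T -> T).

Definition proper_norm (N : T -> R) : Prop :=
  [/\ (forall g, N g = R0 <-> g = z),
      (forall g, N (opp g) = N g),
      (forall g h, Rle (N (add g h)) (Rplus (N g) (N h))) &
      (forall r : R, exists l : list T, forall g, Rle (N g) r -> In g l)].

Definition norm_dist (N : T -> R) (g h : T) : R := N (add (opp g) h).
End Coarse.

Definition coarse_map {X Y : Type} (dX : X -> X -> R) (dY : Y -> Y -> R)
  (f : X -> Y) : Prop :=
  forall delta : R, exists eps : R, forall x y,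
    Rle (dX x y) delta -> Rle (dY (f x) (f y)) eps.

Definition bounded_dist {X Y : Type} (dY : Y -> Y -> R) (u v : X -> Y) : Prop :=
  exists C : R, forall x, Rle (dY (u x) (v x)) C.

Definition coarse_equivalence {X Y : Type} (dX : X -> X -> R) (dY : Y -> Y -> R)
  (f : X -> Y) : Prop :=
  coarse_map dX dY f /\
  exists g : Y -> X, coarse_map dY dX g /\
    bounded_dist dX (fun x => g (f x)) id /\ bounded_dist dY (fun y => f (g y)) id.

Definition l1_dist {X Y : Type} (dX : X -> X -> R) (dY : Y -> Y -> R)
  (p q : X * Y) : R := Rplus (dX p.1 q.1) (dY p.2 q.2).

Definition coarsely_split {A G Q : Type}
  (zA : A) (addA : A -> A -> A) (oppA : A -> A)
  (zG : G) (addG : G -> G -> G) (oppG : G -> G)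
  (zQ : Q) (addQ : Q -> Q -> Q) (oppQ : Q -> Q)
  (i : A -> G) (pi : G -> Q) : Prop :=
  exists (NA : A -> R) (NG : G -> R) (NQ : Q -> R),
    [/\ proper_norm zA addA oppA NA, proper_norm zG addG oppG NG,
        proper_norm zQ addQ oppQ NQ &
    exists f : G -> A * Q,
      let dA := norm_dist addA oppA NA in
      let dG := norm_dist addG oppG NG in
      let dQ := norm_dist addQ oppQ NQ in
      [/\ coarse_equivalence dG (l1_dist dA dQ) f,
          bounded_dist (l1_dist dA dQ) (fun a => f (i a)) (fun a => (a, zQ)) &
          bounded_dist dQ (fun g => (f g).2) pi]].

Local Open Scope ring_scope.

Definition dyadicP (q : rat) : Prop := exists k : nat, q * 2%:R ^+ k \is a Num.int.

Lemma dyadic_int (n : int) : dyadicP n%:~R.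
Proof. by exists 0%N; rewrite expr0 mulr1 rpred_int. Qed.

Lemma dyadicD q r : dyadicP q -> dyadicP r -> dyadicP (q + r).
Proof.
move=> [k hk] [l hl]; exists (k + l)%N.
rewrite exprD mulrDl mulrA (mulrC (2%:R ^+ k)) [r * _]mulrA.
by rewrite rpredD // rpredM // rpredX // rpred_nat.
Qed.

Lemma dyadicN q : dyadicP q -> dyadicP (- q).
Proof. by move=> [k hk]; exists k; rewrite mulNr rpredN. Qed.

Definition dyadic := {q : rat | dyadicP q}.
Definition dy0 : dyadic := exist _ 0 (dyadic_int 0).
Definition dyadd (x y : dyadic) : dyadic :=
  exist _ (sval x + sval y) (dyadicD (proj2_sig x) (proj2_sig y)).
Definition dyopp (x : dyadic) : dyadic := exist _ (- sval x) (dyadicN (proj2_sig x)).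

Definition frac (q : rat) : rat := q - (Num.floor q)%:~R.

Lemma frac_dyadic q : dyadicP q -> dyadicP (frac q).
Proof. by move=> h; apply: dyadicD h (dyadicN (dyadic_int _)). Qed.

Lemma frac_range q : 0 <= frac q < 1.
Proof.
rewrite /frac subr_ge0 floor_le /= ltrBlDr addrC.
by have := floorD1_gt q; rewrite intrD.
Qed.

(* Z(2^oo) realized as dyadic rationals in [0,1) with addition mod 1 *)
Definition Z2inf := {q : rat | dyadicP q /\ 0 <= q < 1}.
Definition tofrac (q : rat) (h : dyadicP q) : Z2inf :=
  exist _ (frac q) (conj (frac_dyadic h) (frac_range q)).
Definition z0 : Z2inf := tofrac (dyadic_int 0).
Definition zadd (x y : Z2inf) : Z2inf :=
  tofrac (dyadicD (proj1 (proj2_sig x)) (proj1 (proj2_sig y))).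
Definition zopp (x : Z2inf) : Z2inf := tofrac (dyadicN (proj1 (proj2_sig x))).

Definition ZK (K : nat) := 'I_K -> int.
Definition ZK0 K : ZK K := fun _ => 0.
Definition ZKadd K (a b : ZK K) : ZK K := fun j => a j + b j.
Definition ZKopp K (a : ZK K) : ZK K := fun j => - a j.

Definition DK (K : nat) := 'I_K -> dyadic.
Definition DK0 K : DK K := fun _ => dy0.
Definition DKadd K (a b : DK K) : DK K := fun j => dyadd (a j) (b j).
Definition DKopp K (a : DK K) : DK K := fun j => dyopp (a j).

Definition QK (K : nat) := 'I_K -> Z2inf.
Definition QK0 K : QK K := fun _ => z0.
Definition QKadd K (a b : QK K) : QK K := fun j => zadd (a j) (b j).
Definition QKopp K (a : QK K) : QK K := fun j => zopp (a j).

Definition inclK K (a : ZK K) : DK K := fun j => exist _ (a j)%:~R (dyadic_int (a j)).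
Definition projK K (g : DK K) : QK K := fun j => tofrac (proj2_sig (g j)).

(* Main.v *)
Set Warnings "-notation-overridden,-ambiguous-paths,-notation-incompatible-prefix".
Require Import Defs.
From Stdlib Require Import Reals List.
From mathcomp Require Import all_boot all_order all_algebra.
From mathcomp Require Import zify.
From mathcomp Require Import ring lra.
Set Implicit Arguments. Unset Strict Implicit. Unset Printing Implicit Defensive.
Import Order.TTheory GRing.Theory Num.Theory.
Section S1.
Local Open Scope ring_scope.

Definition den (q : rat) : nat := `|denq q|%N.

Lemma den_gt0 q : (0 < den q)%N.
Proof. by rewrite /den absz_gt0 denq_neq0. Qed.

Lemma den_dvd q (d : nat) : (den q %| d)%N = ((q * d%:R) \is a Num.int).
Proof.
have hq : (numq q)%:~R = q * (denq q)%:~R := numqE q.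
have hD : (den q)%:R = (denq q)%:~R :> rat.
  by rewrite /den -[(denq q)%:~R]/((denq q)%:~R) -(absz_denq q).
apply/idP/idP.
- case/dvdnP=> c ->; rewrite natrM hD mulrCA -hq.
  by rewrite rpredM // ?rpred_nat ?rpred_int.
- case/intrP=> n hn.
  have e : numq q * d%:Z = n * denq q.
    apply: (@intr_inj rat); rewrite !rmorphM /= hq -hn.
    by rewrite -!mulrA; congr (_ * _); rewrite mulrC.
  have : (den q %| `|numq q|%N * d)%N.
    have -> : (`|numq q| * d = `|n| * den q)%N.
      by have := congr1 absz e; rewrite !abszM /=.
    by rewrite dvdn_mull.
  rewrite Gauss_dvdr //; rewrite coprime_sym; exact: coprime_num_den.
Qed.

Lemma q_den_int q : q * (den q)%:R \is a Num.int.
Proof. by rewrite -den_dvd. Qed.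

Lemma int_shift (q : rat) (n : int) (d : nat) :
  ((q + n%:~R) * d%:R \is a Num.int) = (q * d%:R \is a Num.int).
Proof. by rewrite mulrDl rpredDr // rpredM ?rpred_int ?rpred_nat. Qed.

Lemma den_shift q (n : int) : den (q + n%:~R) = den q.
Proof.
apply/eqP; rewrite eqn_dvd !den_dvd -(int_shift q n) q_den_int /=.
by rewrite -(int_shift _ (- n)) rmorphN /= addrK q_den_int.
Qed.

Lemma den_opp q : den (- q) = den q.
Proof. by rewrite /den denqN. Qed.

Lemma fracE (q : rat) : Defs.frac q = q + (- Num.floor q)%:~R.
Proof. by rewrite /Defs.frac rmorphN. Qed.

Lemma den_frac (q : rat) : den (Defs.frac q) = den q.
Proof. by rewrite fracE den_shift. Qed.

Lemma den_pow2 q : dyadicP q -> exists k, den q = (2 ^ k)%N.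
Proof.
case=> k hk.
have : (den q %| 2 ^ k)%N by rewrite den_dvd natrX.
by case/dvdn_pfactor=> // m _ ->; exists m.
Qed.

Lemma den_add_dy x y : dyadicP x -> dyadicP y ->
  (den (x + y) <= maxn (den x) (den y))%N.
Proof.
move=> /den_pow2 [i hi] /den_pow2 [j hj].
have key : forall b, (den x %| b)%N -> (den y %| b)%N -> (0 < b)%N ->
    (den (x + y) <= b)%N.
  move=> b hx hy hb; apply: dvdn_leq => //; rewrite den_dvd mulrDl.
  by rewrite rpredD // -den_dvd.
case: (leqP i j) => hij.
- apply: leq_trans (leq_maxr _ _); apply: key => //.
  + by rewrite hi hj dvdn_exp2l.
  + exact: den_gt0.
- apply: leq_trans (leq_maxl _ _); apply: key => //.
  + by rewrite hi hj dvdn_exp2l // ltnW.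
  + exact: den_gt0.
Qed.

Definition cz (q : rat) : nat := `|Num.ceil `|q| |%N.

Lemma cz_int q : (cz q)%:Z = Num.ceil `|q|.
Proof. by rewrite /cz abszE ger0_norm // ceil_ge0 (lt_le_trans _ (normr_ge0 q)). Qed.

Lemma cz_add x y : (cz (x + y) <= cz x + cz y)%N.
Proof.
rewrite -lez_nat PoszD !cz_int ceil_le_int rmorphD /=.
apply: le_trans (ler_normD x y) _.
by apply: lerD; apply: ceil_ge.
Qed.

Lemma cz_opp x : cz (- x) = cz x.
Proof. by rewrite /cz normrN. Qed.

Lemma cz_eq0 x : cz x = 0%N -> x = 0.
Proof.
move=> h; have : Num.ceil `|x| <= 0 by rewrite -cz_int h.
by rewrite ceil_le0 normr_le0 => /eqP.
Qed.

Lemma cz0 : cz 0 = 0%N.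
Proof. by rewrite /cz normr0 ceil0. Qed.

Lemma floor_diff (x y : rat) :
  (`|(- Num.floor x + Num.floor y)%R|%N <= cz (- x + y))%N.
Proof.
rewrite -lez_nat cz_int abszE.
have h1 := floor_le x; have h2 := floor_le y.
have h3 := floorD1_gt x; have h4 := floorD1_gt y.
set a := Num.floor x in h1 h3 *; set b := Num.floor y in h2 h4 *.
have hn : x - y <= `|- x + y|.
  by rewrite -normrN opprD opprK; exact: ler_norm.
have hp : - x + y <= `|- x + y| by exact: ler_norm.
rewrite !rmorphD !rmorph1 /= in h3 h4.
rewrite ler_norml; apply/andP; split.
- have : (a - b - 1) < Num.ceil `|- x + y|.
    rewrite ceil_gt_int !rmorphB !rmorph1 /=; lra.
  lia.
- have : (b - a - 1) < Num.ceil `|- x + y|.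
    rewrite ceil_gt_int !rmorphB !rmorph1 /=; lra.
  lia.
Qed.

Lemma cz_inv (a a' : int) (q q' : rat) : 0 <= q < 1 -> 0 <= q' < 1 ->
  (cz (- (a%:~R + q) + (a'%:~R + q')) <= `|(- a + a')%R|%N + 1)%N.
Proof.
move=> /andP[q0 q1] /andP[q'0 q'1].
rewrite -lez_nat cz_int PoszD abszE ceil_le_int.
rewrite rmorphD /= rmorph1 (@intr_norm rat (- a + a')).
have -> : - (a%:~R + q) + (a'%:~R + q') = ((- a + a')%:~R : rat) + (q' - q).
  by rewrite rmorphD rmorphN /=; ring.
apply: le_trans (ler_normD _ _) _; apply: lerD => //.
rewrite ler_norml; apply/andP; split; lra.
Qed.

End S1.
From Stdlib Require Import Lia Lra ProofIrrelevance FunctionalExtensionality.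
Section S2.

Lemma INR_le_up (n : nat) (r : R) : Rle (INR n) r -> (n <= Z.to_nat (up r))%N.
Proof.
move=> h; have [h1 _] := archimed r.
have h2 : Rlt (IZR (Z.of_nat n)) (IZR (up r)) by rewrite -INR_IZR_INZ; exact: (Rle_lt_trans _ _ _ h h1).
apply lt_IZR in h2. lia.
Qed.

Lemma In_mem (T : eqType) (x : T) (s : seq T) : x \in s -> In x s.
Proof.
elim: s => //= y s IH; rewrite inE; case/orP => [/eqP ->|h]; [by left|by right; auto].
Qed.

Definition fun0 (T : Type) : 'I_0 -> T := fun j => False_rect T (ltac:(by case: j)).

Definition cons_fun (T : Type) K (a : T) (h : 'I_K -> T) : 'I_K.+1 -> T :=
  fun j => match unlift ord0 j with None => a | Some j' => h j' end.

Lemma fun_list (T : Type) (L : list T) K :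
  exists l : list ('I_K -> T), forall g, (forall j, In (g j) L) -> In g l.
Proof.
elim: K => [|K [l IH]].
  exists [:: @fun0 T] => g _; left; apply: functional_extensionality; by case.
exists (flat_map (fun a => map (fun h => cons_fun a h) l) L) => g hg.
apply/in_flat_map; exists (g ord0); split; first exact: hg.
apply/in_map_iff; exists (fun j => g (lift ord0 j)); split; last by apply: IH.
apply: functional_extensionality => j; rewrite /cons_fun.
by case: unliftP => [j'|] ->.
Qed.

Lemma sig_list (P : rat -> Prop) (l : list rat) :
  exists l' : list {q : rat | P q}, forall x, In (sval x) l -> In x l'.
Proof.
elim: l => [|a l [l' IH]]; first by exists nil.
case: (Classical_Prop.classic (P a)) => [h|h].
- exists (exist _ a h :: l') => [[x hx]] /= [e|hi].
  + left; subst; by rewrite (proof_irrelevance _ hx h).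
  + by right; apply: (IH (exist _ x hx)).
- exists l' => [[x hx]] /= [e|hi]; first by subst.
  exact: (IH (exist _ x hx)).
Qed.

Lemma int_list (B : nat) : exists l : list int, forall a : int, (`|a|%N <= B)%N -> In a l.
Proof.
exists [seq (i%:Z - B%:Z)%R | i <- iota 0 (B + B).+1] => a ha; apply: In_mem.
apply/mapP; exists `|(a + B%:Z)%R|%N; first by rewrite mem_iota; lia.
lia.
Qed.

Lemma term_le_sum K (F : 'I_K -> nat) j : (F j <= \sum_(i < K) F i)%N.
Proof. by rewrite (bigD1 j) //= leq_addr. Qed.

Lemma proper_sum (T : Type) K (z : T) (add : T -> T -> T) (opp : T -> T) (n : T -> nat) :
  (forall x, n x = 0%N <-> x = z) ->
  (forall x, n (opp x) = n x) ->
  (forall x y, (n (add x y) <= n x + n y)%N) ->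
  (forall B, exists l : list T, forall x, (n x <= B)%N -> In x l) ->
  proper_norm (fun _ : 'I_K => z) (fun a b j => add (a j) (b j)) (fun a j => opp (a j))
    (fun g => INR (\sum_(j < K) n (g j))%N).
Proof.
move=> hz hopp hadd hfin; split.
- move=> g; split.
  + move=> h.
    have hs : (\sum_(j < K) n (g j) = 0)%N by apply: INR_eq; rewrite h.
    apply: functional_extensionality => j; apply/hz.
    by have := term_le_sum (fun j => n (g j)) j; rewrite hs; lia.
  + move=> ->; rewrite big1 //= => j _; exact/hz.
- by move=> g /=; f_equal; apply: eq_bigr => j _; exact: hopp.
- move=> g h; rewrite -plus_INR; apply: le_INR; apply/ssrnat.leP.
  by rewrite plusE -big_split; apply: leq_sum => j _.
- move=> r; have [L hL] := hfin (Z.to_nat (up r)).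
  have [l hl] := fun_list L K; exists l => g hg; apply: hl => j; apply: hL.
  exact: leq_trans (term_le_sum (fun j => n (g j)) j) (INR_le_up hg).
Qed.

Local Open Scope ring_scope.

Lemma den_intr (q : rat) : (den q)%:R = (denq q)%:~R :> rat.
Proof. by rewrite /den -[(denq q)%:~R]/((denq q)%:~R) -(absz_denq q). Qed.

Lemma numq_bound (q : rat) : (`|numq q|%N <= cz q * den q)%N.
Proof.
rewrite -lez_nat -(ler_int rat) PoszM !rmorphM /= cz_int abszE.
rewrite (@intr_norm rat) numqE normrM -den_intr normr_nat.
by apply: ler_wpM2r => //; apply: ceil_ge.
Qed.

Lemma rat_list (B : nat) : exists l : list rat,
  forall q : rat, (cz q <= B)%N -> (den q <= B)%N -> In q l.
Proof.
pose M := (B * B)%N.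
exists [seq (n%:~R / d%:R : rat) | n <- [seq (i%:Z - M%:Z) | i <- iota 0 (M + M).+1],
                                 d <- iota 1 B].
move=> q hc hd; apply: In_mem.
have hn : (`|numq q|%N <= M)%N.
  apply: leq_trans (numq_bound q) _; rewrite /M; exact: leq_mul.
rewrite -[X in X \in _]divq_num_den -den_intr.
apply: allpairs_f.
- apply/mapP; exists `|(numq q + M%:Z)%R|%N; first by rewrite mem_iota; lia.
  lia.
- have := den_gt0 q; rewrite mem_iota; lia.
Qed.

Lemma den0 : den 0 = 1%N.
Proof. by []. Qed.

Lemma den_intr_int (n : int) : den n%:~R = 1%N.
Proof. by rewrite -[n%:~R]add0r den_shift den0. Qed.

Lemma int_den1 (q : rat) : den q = 1%N -> q = (Num.floor q)%:~R.
Proof.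
move=> h; have : q * 1%:R \is a Num.int by rewrite -den_dvd h.
by rewrite mulr1 => /floorK ->.
Qed.

Definition nZ (a : int) : nat := `|a|%N.
Definition nDy (x : dyadic) : nat := (cz (sval x) + (den (sval x)).-1)%N.
Definition nQ (x : Z2inf) : nat := (den (sval x)).-1.

Definition NA K (a : ZK K) : R := INR (\sum_(j < K) nZ (a j))%N.
Definition NG K (g : DK K) : R := INR (\sum_(j < K) nDy (g j))%N.
Definition NQ K (q : QK K) : R := INR (\sum_(j < K) nQ (q j))%N.

Lemma proper_ZK K : proper_norm (@ZK0 K) (@ZKadd K) (@ZKopp K) (@NA K).
Proof.
apply: (@proper_sum int K 0 +%R (fun x => - x) nZ).
- by move=> x; rewrite /nZ; split => [/eqP|->//]; rewrite absz_eq0 => /eqP.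
- by move=> x; rewrite /nZ abszN.
- by move=> x y; rewrite /nZ; lia.
- move=> B; have [l hl] := int_list B; by exists l.
Qed.

Lemma sval_dy0 : sval dy0 = 0. Proof. by []. Qed.

Lemma proper_DK K : proper_norm (@DK0 K) (@DKadd K) (@DKopp K) (@NG K).
Proof.
apply: (@proper_sum dyadic K dy0 dyadd dyopp nDy).
- move=> [x hx]; rewrite /nDy /=; split.
  + move=> h; have hc : cz x = 0%N by lia.
    have e := cz_eq0 hc; subst x.
    by rewrite /dy0 (proof_irrelevance _ hx (dyadic_int 0)).
  + by move=> [->]; rewrite cz0 den0.
- by move=> x; rewrite /nDy /= cz_opp den_opp.
- move=> [x hx] [y hy]; rewrite /nDy /=.
  have := cz_add x y; have := den_add_dy hx hy.
  have := den_gt0 x; have := den_gt0 y; lia.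
- move=> B; have [l hl] := rat_list B.+1.
  have [l' hl'] := sig_list dyadicP l; exists l' => x hx; apply: hl'; apply: hl.
  + rewrite /nDy in hx; lia.
  + rewrite /nDy in hx; have := den_gt0 (sval x); lia.
Qed.

Lemma sval_z0 : sval z0 = 0.
Proof. by rewrite /= fracE floor0 oppr0 addr0. Qed.

Lemma proper_QK K : proper_norm (@QK0 K) (@QKadd K) (@QKopp K) (@NQ K).
Proof.
apply: (@proper_sum Z2inf K z0 zadd zopp nQ).
- move=> [x hx]; rewrite /nQ /=; split.
  + move=> h; have h1 : den x = 1%N by have := den_gt0 x; lia.
    have ex := int_den1 h1.
    have hf : Num.floor x = 0.
      case: hx => _ /andP[h0 hl].
      apply/eqP; rewrite eq_le floor_le0 hl floor_ge0 h0 //.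
    rewrite hf in ex; subst x.
    have e0 : sval z0 = 0%:~R by rewrite sval_z0.
    move: hx; rewrite -e0 => hx.
    by case: z0 hx => y hy /= hx; rewrite (proof_irrelevance _ hx hy).
  + move=> e; have -> : x = sval z0 by rewrite -e.
    by rewrite sval_z0 den0.
- by move=> x; rewrite /nQ /= den_frac den_opp.
- move=> [x hx] [y hy]; rewrite /nQ /= den_frac.
  have := den_add_dy (proj1 hx) (proj1 hy).
  have := den_gt0 x; have := den_gt0 y; lia.
- move=> B; have [l hl] := rat_list B.+1.
  have [l' hl'] := sig_list (fun q => dyadicP q /\ 0 <= q < 1) l.
  exists l' => x hx; apply: hl'; apply: hl.
  + case: x hx => q [_ /andP[q0 q1]] /= _.
    have : (cz q <= 1)%N.
      rewrite -lez_nat cz_int ceil_le_int ger0_norm //; exact: ltW.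
    lia.
  + rewrite /nQ in hx; have := den_gt0 (sval x); lia.
Qed.

End S2.
From mathcomp Require Import ring.
Section S3.
Local Open Scope ring_scope.

Lemma sumK1 K : (\sum_(j < K) 1 = K)%N.
Proof. by rewrite sum1_card card_ord. Qed.

Lemma den_frac_l (u v : rat) : den (- Defs.frac u + v) = den (- u + v).
Proof.
rewrite fracE opprD addrAC -rmorphN /=.
by rewrite den_shift.
Qed.

Lemma den_frac_r (u v : rat) : den (u + Defs.frac v) = den (u + v).
Proof. by rewrite fracE addrA den_shift. Qed.

Lemma den_frac_add (u v : rat) : den (Defs.frac u + v) = den (u + v).
Proof. by rewrite fracE addrAC den_shift. Qed.

Lemma nQ_dist (a b : Z2inf) : nQ (zadd (zopp a) b) = (den (- sval a + sval b)).-1.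
Proof. by rewrite /nQ /= den_frac den_frac_add. Qed.

Definition fmap K (g : DK K) : ZK K * QK K :=
  (fun j => Num.floor (sval (g j)), @projK K g).

Definition hmap K (p : ZK K * QK K) : DK K := fun j =>
  exist _ ((p.1 j)%:~R + sval (p.2 j))
    (dyadicD (dyadic_int (p.1 j)) (proj1 (proj2_sig (p.2 j)))).

Lemma sval_projK K (g : DK K) j : sval (projK g j) = Defs.frac (sval (g j)).
Proof. by []. Qed.

Lemma comp1 (x y : dyadic) :
  (nZ (- Num.floor (sval x) + Num.floor (sval y)) +
   nQ (zadd (zopp (Defs.tofrac (proj2_sig x))) (Defs.tofrac (proj2_sig y)))
   <= nDy (dyadd (dyopp x) y))%N.
Proof.
rewrite nQ_dist /= den_frac_l den_frac_r /nDy /= /nZ.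
by rewrite leq_add2r floor_diff.
Qed.

Lemma frac_bounds (q : Z2inf) : 0 <= sval q < 1.
Proof. exact: (proj2 (proj2_sig q)). Qed.

Lemma comp2 K (p p' : ZK K * QK K) j :
  (nDy (dyadd (dyopp (hmap p j)) (hmap p' j))
   <= nZ (- p.1 j + p'.1 j)%R + nQ (zadd (zopp (p.2 j)) (p'.2 j)) + 1)%N.
Proof.
rewrite nQ_dist /nDy /= /nZ.
have h := cz_inv (p.1 j) (p'.1 j) (frac_bounds (p.2 j)) (frac_bounds (p'.2 j)).
have e : - ((p.1 j)%:~R + sval (p.2 j)) + ((p'.1 j)%:~R + sval (p'.2 j))
   = (- sval (p.2 j) + sval (p'.2 j)) + (- p.1 j + p'.1 j)%:~R.
  by rewrite rmorphD rmorphN /=; ring.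
rewrite e den_shift; rewrite e in h; lia.
Qed.

Lemma comp3 K (x : DK K) j : nDy (dyadd (dyopp (hmap (fmap x) j)) (x j)) = 0%N.
Proof.
rewrite /nDy /=.
have -> : - ((Num.floor (sval (x j)))%:~R + Defs.frac (sval (x j))) + sval (x j) = 0.
  by rewrite /Defs.frac; ring.
by rewrite cz0 den0.
Qed.

Lemma floor_add_frac (a : int) (q : Z2inf) : Num.floor (a%:~R + sval q) = a.
Proof.
have /andP[h0 h1] := frac_bounds q.
apply: floor_def; rewrite rmorphD rmorph1 /=.
by rewrite lerDl h0 ltrD2l h1.
Qed.

Lemma comp4a K (p : ZK K * QK K) j : nZ (- (fmap (hmap p)).1 j + p.1 j) = 0%N.
Proof. by rewrite /= floor_add_frac addNr. Qed.

Lemma comp4b K (p : ZK K * QK K) j :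
  nQ (zadd (zopp ((fmap (hmap p)).2 j)) (p.2 j)) = 0%N.
Proof.
rewrite nQ_dist sval_projK den_frac_l /=.
have -> : - ((p.1 j)%:~R + sval (p.2 j)) + sval (p.2 j) = 0 + (- p.1 j)%:~R.
  by rewrite rmorphN /=; ring.
by rewrite den_shift den0.
Qed.

Lemma comp5a K (a : ZK K) j : nZ (- (fmap (inclK a)).1 j + a j) = 0%N.
Proof. by rewrite /= intrKfloor addNr. Qed.

Lemma comp5b K (a : ZK K) j : nQ (zadd (zopp ((fmap (inclK a)).2 j)) (@QK0 K j)) = 0%N.
Proof.
rewrite nQ_dist sval_projK den_frac_l /QK0 sval_z0 addr0 /=.
by rewrite -rmorphN den_intr_int.
Qed.

Lemma comp6 (c : Z2inf) : nQ (zadd (zopp c) c) = 0%N.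
Proof. by rewrite nQ_dist addNr den0. Qed.

Lemma INR_sum_le (n m : nat) : (n <= m)%N -> Rle (INR n) (INR m).
Proof. by move=> h; apply: le_INR; apply/ssrnat.leP. Qed.

End S3.
Local Open Scope ring_scope.

Theorem mainTheorem17 (K : nat) (hK : (1 <= K)%N) :
  coarsely_split (@ZK0 K) (@ZKadd K) (@ZKopp K)
                 (@DK0 K) (@DKadd K) (@DKopp K)
                 (@QK0 K) (@QKadd K) (@QKopp K)
                 (@inclK K) (@projK K).
Proof.
exists (@NA K), (@NG K), (@NQ K); split;
  [exact: proper_ZK | exact: proper_DK | exact: proper_QK |].
exists (@fmap K); move=> dA dG dQ; rewrite /dA /dG /dQ.
split.
- split.
  + move=> delta; exists delta => x y hxy.
    apply: Rle_trans hxy; rewrite /l1_dist /norm_dist /NA /NQ /NG -plus_INR.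
    apply: INR_sum_le; rewrite plusE -big_split; apply: leq_sum => j _.
    exact: comp1.
  + exists (@hmap K); split; [|split].
    * move=> delta; exists (Rplus delta (INR K)) => p p' hp.
      rewrite /l1_dist /norm_dist /NA /NQ /NG in hp *.
      apply: Rle_trans (Rplus_le_compat_r _ _ _ hp).
      rewrite -!plus_INR; apply: INR_sum_le.
      rewrite !plusE -[X in (_ <= _ + X)%N](sumK1 K) -!big_split; apply: leq_sum => j _.
      exact: comp2.
    * exists R0 => x; rewrite /norm_dist /NG big1 /=; first exact: Rle_refl.
      move=> j _; exact: comp3.
    * exists R0 => p; rewrite /l1_dist /norm_dist /NA /NQ big1 /=; last first.
        move=> j _; exact: comp4a.
      rewrite big1 /=; last by move=> j _; exact: comp4b.
      rewrite Rplus_0_l; exact: Rle_refl.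
- exists R0 => a; rewrite /l1_dist /norm_dist /NA /NQ big1 /=; last first.
    move=> j _; exact: comp5a.
  rewrite big1 /=; last by move=> j _; exact: comp5b.
  rewrite Rplus_0_l; exact: Rle_refl.
- exists R0 => g; rewrite /norm_dist /NQ big1 /=; first exact: Rle_refl.
  move=> j _; exact: comp6.
Qed.
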